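(* Let $\alpha$ be a unit speed Frenet curve in $\mathbb{E}^3$ with curvature $\kappa$, let $\beta$ be an osculating mate of $\alpha$, and let $\theta(s)=\int\kappa(s)ds$ be the antiderivative of $\kappa$ with $\beta'=\sin\theta\,T+\cos\theta\,N$. Then $\beta$ is a rectifying curve if and only if $\tan\theta(s)$ is a linear function of $s$, i.e. $\tan\theta(s)=a_1s+a_2$ for real constants $a_1\neq0$, $a_2$.
   Context: $\alpha:I\to\mathbb{E}^3$ is parametrized by arclength $s$, with Frenet frame $\{T,N,B\}$, curvature $\kappa>0$, torsion $\tau$. An osculating mate of $\alpha$ is a curve $\beta(s)=\int(x_1T+x_2N)ds$ with smooth $x_1,x_2$, $x_1^2+x_2^2=1$ and $\beta''\perp\mathrm{span}\{T,N\}$; $\beta$ is assumed to be a Frenet curve, unit speed in $s$, with Frenet frame $\{\bar T,\bar N,\bar B\}$. Being given by an indefinite integral, $\beta$ is determined up to a translation, and ''$\beta$ is rectifying'' is understood for a suitable choice of this integration constant. A Frenet curve is rectifying if its position vector always lies in its rectifying plane $\mathrm{span}\{\bar T,\bar B\}$; for a unit speed curve with curvature $\bar\kappa$ and torsion $\bar\tau$ this is characterized (up to translation) by $\bar\tau/\bar\kappa=\frac1c(s+b)$ for real constants $c\neq0$, $b$. *)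

(* Defs.v *)
From HB Require Import structures.
From mathcomp Require Import all_boot all_order all_algebra.
From mathcomp Require Import all_classical all_reals all_analysis.
Set Implicit Arguments. Unset Strict Implicit. Unset Printing Implicit Defensive.
Import Order.TTheory GRing.Theory Num.Theory.
Import numFieldNormedType.Exports.
Local Open Scope classical_set_scope.
Local Open Scope ring_scope.

Section E3.
Variable R : realType.
Notation V := 'rV[R]_3.

Definition dotp (u v : V) : R := \sum_(i < 3) u 0 i * v 0 i.
Definition enorm (u : V) : R := Num.sqrt (dotp u u).
Definition crossp (u v : V) : V :=
  let c (w : V) (k : nat) := w 0 (inord k) in
  \row_(k < 3) match val k with
               | 0 => c u 1 * c v 2 - c u 2 * c v 1
               | 1 => c u 2 * c v 0 - c u 0 * c v 2
               | _ => c u 0 * c v 1 - c u 1 * c v 0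
               end.

Definition frenetT (g : R -> V) (s : R) : V := derive1 g s.
Definition frenetN (g : R -> V) (s : R) : V :=
  (enorm (derive1 (derive1 g) s))^-1 *: derive1 (derive1 g) s.
Definition frenetB (g : R -> V) (s : R) : V :=
  crossp (frenetT g s) (frenetN g s).

Definition rectifying_on (I : set R) (g : R -> V) : Prop :=
  forall s, I s -> exists l m : R, g s = l *: frenetT g s + m *: frenetB g s.

End E3.

(* Main.v *)
Require Import Defs.
From HB Require Import structures.
From mathcomp Require Import all_boot all_order all_algebra.
From mathcomp Require Import all_classical all_reals all_analysis.
From mathcomp Require Import ring lra.
Import Order.TTheory GRing.Theory Num.Theory.
Import numFieldNormedType.Exports.
Local Open Scope classical_set_scope.
Local Open Scope ring_scope.

Section Alg.
Context {R : realType}.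
Implicit Types u v w a b : 'rV[R]_3.

Lemma ord3E (i : 'I_3) : i = inord 0 \/ i = inord 1 \/ i = inord 2.
Proof.
case: i => [[|[|[|k]]] Hk].
- by left; apply/val_inj; rewrite /= inordK.
- by right; left; apply/val_inj; rewrite /= inordK.
- by right; right; apply/val_inj; rewrite /= inordK.
- by [].
Qed.

Lemma sum3 (F : 'I_3 -> R) : \sum_(i < 3) F i = F (inord 0) + F (inord 1) + F (inord 2).
Proof.
rewrite !big_ord_recl big_ord0 addr0 addrA.
by congr (_ + _ + _); congr F; apply/val_inj; rewrite /= inordK.
Qed.

Lemma row3P u v : u 0 (inord 0) = v 0 (inord 0) -> u 0 (inord 1) = v 0 (inord 1) ->
  u 0 (inord 2) = v 0 (inord 2) -> u = v.
Proof.
move=> h0 h1 h2; apply/rowP => i; case: (ord3E i) => [->|[->|->]] //.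
Qed.

Lemma val3 k : (k < 3)%N -> \val (inord k : 'I_3) = k.
Proof. exact: inordK. Qed.

Lemma crossp0 u v : crossp u v 0 (inord 0) = u 0 (inord 1) * v 0 (inord 2) - u 0 (inord 2) * v 0 (inord 1).
Proof. by rewrite /crossp mxE val3. Qed.
Lemma crossp1 u v : crossp u v 0 (inord 1) = u 0 (inord 2) * v 0 (inord 0) - u 0 (inord 0) * v 0 (inord 2).
Proof. by rewrite /crossp mxE val3. Qed.
Lemma crossp2 u v : crossp u v 0 (inord 2) = u 0 (inord 0) * v 0 (inord 1) - u 0 (inord 1) * v 0 (inord 0).
Proof. by rewrite /crossp mxE val3. Qed.

Lemma dotpE u v : dotp u v = u 0 (inord 0) * v 0 (inord 0) + u 0 (inord 1) * v 0 (inord 1) + u 0 (inord 2) * v 0 (inord 2).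
Proof. by rewrite /dotp sum3. Qed.

Ltac crunch := rewrite ?dotpE; rewrite ?(crossp0, crossp1, crossp2); rewrite ?(crossp0, crossp1, crossp2); rewrite ?mxE; rewrite ?val3 //; ring.
Ltac crunchv := apply: row3P; rewrite ?(crossp0, crossp1, crossp2); rewrite ?dotpE; rewrite ?(crossp0, crossp1, crossp2); rewrite ?mxE; rewrite ?val3 //; ring.

Lemma dotpC u v : dotp u v = dotp v u. Proof. crunch. Qed.
Lemma dotpDl u v w : dotp (u + v) w = dotp u w + dotp v w. Proof. crunch. Qed.
Lemma dotpDr u v w : dotp w (u + v) = dotp w u + dotp w v. Proof. crunch. Qed.
Lemma dotpBl u v w : dotp (u - v) w = dotp u w - dotp v w. Proof. crunch. Qed.
Lemma dotpZl k u v : dotp (k *: u) v = k * dotp u v. Proof. crunch. Qed.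
Lemma dotpZr k u v : dotp u (k *: v) = k * dotp u v. Proof. crunch. Qed.
Lemma dotpNr u v : dotp u (- v) = - dotp u v. Proof. crunch. Qed.
Lemma dotpNl u v : dotp (- u) v = - dotp u v. Proof. crunch. Qed.
Lemma dotp0r u : dotp u 0 = 0. Proof. crunch. Qed.
Lemma dotp_crossl u v : dotp u (crossp u v) = 0. Proof. crunch. Qed.
Lemma dotp_crossr u v : dotp v (crossp u v) = 0. Proof. crunch. Qed.
Lemma crossp_cross a b c : crossp a (crossp b c) = dotp a c *: b - dotp a b *: c.
Proof. crunchv. Qed.
Lemma crossp0r u : crossp u 0 = 0. Proof. crunchv. Qed.
Lemma dotp_crossp_self a b : dotp (crossp a b) (crossp a b) = dotp a a * dotp b b - dotp a b ^+ 2.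
Proof. crunch. Qed.
Lemma crosspZr k u v : crossp u (k *: v) = k *: crossp u v. Proof. crunchv. Qed.

End Alg.
Section An.
Context {R : realType}.

Lemma coord_is_derive (f : R -> 'rV[R]_3) s (i : 'I_3) :
  derivable f s 1 -> is_derive s 1 (fun t => f t 0 i) ((derive1 f s) 0 i).
Proof.
move=> df.
have qE : (fun h : R => h^-1 *: (((fun t => f t 0 i) \o shift s) (h *: 1) - f s 0 i))
   = (fun M : 'rV[R]_3 => M 0 i) \o (fun h : R => h^-1 *: ((f \o shift s) (h *: 1) - f s)).
  by apply/funext => h /=; rewrite !mxE.
have cv : (fun h : R => h^-1 *: (((fun t => f t 0 i) \o shift s) (h *: 1) - f s 0 i)) @ 0^'
   --> (derive1 f s) 0 i.
  rewrite qE derive1E /derive; apply: continuous_cvg; first exact: coord_continuous.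
  exact: df.
apply: DeriveDef; first by apply/cvg_ex; eexists; exact: cv.
by rewrite /derive; exact: cvg_lim cv.
Qed.


Lemma scr (a b : R) : a *: b = a * b. Proof. by []. Qed.

Lemma dotp_is_derive (f g : R -> 'rV[R]_3) s :
  derivable f s 1 -> derivable g s 1 ->
  is_derive s 1 (fun t => dotp (f t) (g t))
    (dotp (derive1 f s) (g s) + dotp (f s) (derive1 g s)).
Proof.
move=> df dg.
have h (k : nat) := is_deriveM (@coord_is_derive f s (inord k) df) (@coord_is_derive g s (inord k) dg).
have H := is_deriveD (is_deriveD (h 0%N) (h 1%N)) (h 2%N).
have E : (fun t => dotp (f t) (g t)) = (fun t => f t 0 (inord 0) * g t 0 (inord 0) + f t 0 (inord 1) * g t 0 (inord 1) + f t 0 (inord 2) * g t 0 (inord 2)).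
  by apply/funext => t; rewrite dotpE.
rewrite E; apply: (is_derive_eq H).
rewrite !dotpE !scr; ring.
Qed.

Lemma loc_derive1 (I : set R) (phi psi : R -> R) s : open I -> I s ->
  (forall t, I t -> phi t = psi t) -> derive1 phi s = derive1 psi s.
Proof.
move=> oI Is E; rewrite !derive1E; apply: near_eq_derive.
have : nbhs s I by apply: open_nbhs_nbhs; split.
by apply: filterS => t It; exact: E.
Qed.

Lemma loc_zero (I : set R) (phi : R -> R) s d : open I -> I s ->
  (forall t, I t -> phi t = 0) -> is_derive s 1 phi d -> d = 0.
Proof.
move=> oI Is E [_ <-]; rewrite -derive1E (@loc_derive1 I phi (cst 0) s oI Is E).
by rewrite derive1E derive_cst.
Qed.

Lemma itv_cst (I : set R) (phi : R -> R) : is_interval I ->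
  (forall t, I t -> is_derive t 1 phi 0) -> forall x y, I x -> I y -> phi x = phi y.
Proof.
move=> iI D.
suff H : forall x y, x <= y -> I x -> I y -> phi x = phi y.
  move=> x y Ix Iy; case: (leP x y) => xy; first exact: H.
  by apply/esym/H => //; exact: ltW.
move=> x y xy Ix Iy.
have Iin : forall z, x <= z <= y -> I z by move=> z; apply: iI.
have H1 : forall z, z \in `]x, y[ -> is_derive z 1 phi ((fun _ => 0) z).
  move=> z zin; apply: D; apply: Iin.
  by rewrite in_itv /= in zin; case/andP: zin => a b; rewrite !ltW.
have H2 : {within `[x, y], continuous phi}.
  apply: derivable_within_continuous => z zin; apply: (@ex_derive _ _ _ _ _ _ 0).
  apply: D; apply: Iin.
  by rewrite in_itv /= in zin.
have [c _ E] := @MVT_segment R phi (fun _ => 0) x y xy H1 H2.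
by apply/eqP; rewrite eq_sym -subr_eq0 E mul0r.
Qed.


Lemma perpB (T N v : 'rV[R]_3) : dotp T T = 1 -> dotp N N = 1 -> dotp T N = 0 ->
  dotp v T = 0 -> dotp v N = 0 -> v = dotp v (crossp T N) *: crossp T N.
Proof.
move=> hT hN hTN hvT hvN.
have e1 : crossp v (crossp T N) = 0 by rewrite crossp_cross hvT hvN !scale0r subr0.
have := crossp_cross (crossp T N) v (crossp T N).
rewrite e1 crossp0r dotp_crossp_self hT hN hTN.
rewrite expr0n /= subr0 mulr1 scale1r => /eqP; rewrite eq_sym subr_eq0 => /eqP {1}->.
by rewrite dotpC.
Qed.

Lemma derive1_addc (f : R -> 'rV[R]_3) c : derive1 (fun t => f t + c) = derive1 f.
Proof.
apply/funext => s.
have E : (fun h : R => h^-1 *: (f (h + s) + c - (f s + c))) = (fun h => h^-1 *: (f (h + s) - f s)).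
  by apply/funext=> h; rewrite opprD addrACA subrr addr0.
by rewrite /derive1 E.
Qed.

Lemma d1 (V : normedModType R) (f : R -> V) s : derivable f s 1 -> is_derive s 1 f (derive1 f s).
Proof. by move=> d; rewrite derive1E; apply: derivableP. Qed.

End An.
Arguments dotp_is_derive {R f g s}.
Arguments loc_zero {R I phi s d}.
Arguments loc_derive1 {R I phi psi s}.
Arguments itv_cst {R I phi}.
Arguments d1 {R V f s}.
Theorem theorem7 (R : realType) (I : set R)
    (alpha T N B : R -> 'rV[R]_3) (kappa tau : R -> R)
    (beta : R -> 'rV[R]_3) (x1 x2 theta : R -> R) :
  open I -> is_interval I ->
  (forall s, I s -> derivable alpha s 1 /\ derive1 alpha s = T s) ->
  (forall s, I s -> dotp (T s) (T s) = 1 /\ dotp (N s) (N s) = 1 /\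
                    dotp (T s) (N s) = 0 /\ B s = crossp (T s) (N s)) ->
  (forall s, I s -> 0 < kappa s) ->
  (forall s, I s -> {for s, continuous kappa} /\ {for s, continuous tau}) ->
  (forall s, I s ->
     derivable T s 1 /\ derivable N s 1 /\ derivable B s 1 /\
     derive1 T s = kappa s *: N s /\
     derive1 N s = - kappa s *: T s + tau s *: B s /\
     derive1 B s = - tau s *: N s) ->
  (forall s, I s -> derivable x1 s 1 /\ derivable x2 s 1 /\
                    x1 s ^+ 2 + x2 s ^+ 2 = 1) ->
  (forall s, I s -> derivable beta s 1 /\
                    derive1 beta s = x1 s *: T s + x2 s *: N s) ->
  (forall s, I s -> derivable (derive1 beta) s 1 /\
                    dotp (derive1 (derive1 beta) s) (T s) = 0 /\
                    dotp (derive1 (derive1 beta) s) (N s) = 0) ->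
  (forall s, I s -> derive1 (derive1 beta) s != 0) ->
  (forall s, I s -> derivable theta s 1 /\ derive1 theta s = kappa s) ->
  (forall s, I s -> derive1 beta s = sin (theta s) *: T s + cos (theta s) *: N s) ->
  (exists c : 'rV[R]_3, rectifying_on I (fun s => beta s + c)) <->
  (exists a1 a2 : R, a1 != 0 /\ forall s, I s -> tan (theta s) = a1 * s + a2).
Proof.
move=> oI iI _ Hfr Hk _ HF _ Hb1 Hb2 Hnz Hth Hbeta.
have fr : forall s, I s -> [/\ dotp (T s) (T s) = 1, dotp (N s) (N s) = 1,
   dotp (T s) (N s) = 0, dotp (N s) (T s) = 0 &
   [/\ dotp (T s) (B s) = 0, dotp (N s) (B s) = 0, dotp (B s) (T s) = 0,
       dotp (B s) (N s) = 0 & dotp (B s) (B s) = 1]].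
  move=> s Is; have [h1 [h2 [h3 h4]]] := Hfr s Is.
  split => //; first by rewrite dotpC.
  rewrite h4; split; rewrite ?dotp_crossl ?dotp_crossr //.
  - by rewrite dotpC dotp_crossl.
  - by rewrite dotpC dotp_crossr.
  - by rewrite dotp_crossp_self h1 h2 h3 expr0n /= subr0 mulr1.
have bB : forall s, I s -> dotp (derive1 beta s) (B s) = 0.
  move=> s Is; have [_ _ _ _ [h1 h2 _ _ _]] := fr s Is.
  by rewrite Hbeta // dotpDl !dotpZl h1 h2 !mulr0 addr0.
have bN : forall s, I s -> dotp (derive1 beta s) (N s) = cos (theta s).
  move=> s Is; have [_ h2 h3 _ _] := fr s Is.
  by rewrite Hbeta // dotpDl !dotpZl h2 h3 mulr0 add0r mulr1.
have bT : forall s, I s -> dotp (derive1 beta s) (T s) = sin (theta s).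
  move=> s Is; have [h1 _ _ h4 _] := fr s Is.
  by rewrite Hbeta // dotpDl !dotpZl h1 h4 mulr0 addr0 mulr1.
have ddB : forall s, I s -> dotp (derive1 (derive1 beta) s) (B s) = tau s * cos (theta s).
  move=> s Is.
  have D := dotp_is_derive (Hb2 s Is).1 (HF s Is).2.2.1.
  have Z := loc_zero oI Is bB D.
  have [_ [_ [_ [_ [_ HB']]]]] := HF s Is.
  move: Z; rewrite HB' dotpZr dotpC bN // => /eqP; rewrite addr_eq0 => /eqP ->.
  by rewrite mulNr opprK.
have ddv : forall s, I s -> derive1 (derive1 beta) s = (tau s * cos (theta s)) *: B s.
  move=> s Is; have [h1 [h2 [h3 h4]]] := Hfr s Is.
  have [_ [e1 e2]] := Hb2 s Is.
  by rewrite -ddB // h4; apply: perpB.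
have tc : forall s, I s -> tau s * cos (theta s) != 0.
  move=> s Is; apply/eqP => E; move: (Hnz s Is); rewrite ddv // E scale0r.
  by rewrite eqxx.
have FB : forall (c : 'rV[R]_3) s, I s -> exists nu, nu != 0 /\
    frenetT (fun t => beta t + c) s = derive1 beta s /\
    frenetB (fun t => beta t + c) s = nu *: (cos (theta s) *: T s - sin (theta s) *: N s).
  move=> c s Is.
  have [h1 [h2 [h3 h4]]] := Hfr s Is.
  have [_ _ _ _ [_ _ _ _ hBB]] := fr s Is.
  have mu0 : tau s * cos (theta s) != 0 := tc s Is.
  have en : 0 < enorm (derive1 (derive1 beta) s).
    rewrite /enorm sqrtr_gt0 ddv // dotpZl dotpZr hBB mulr1.
    by rewrite lt_neqAle eq_sym mulf_neq0 //= -expr2 sqr_ge0.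
  exists ((enorm (derive1 (derive1 beta) s))^-1 * (tau s * cos (theta s))).
  split; first by rewrite mulf_neq0 // invr_neq0 // lt0r_neq0.
  split; first by rewrite /frenetT derive1_addc.
  rewrite /frenetB /frenetN /frenetT !derive1_addc.
  rewrite [in X in crossp _ (_ *: X)]ddv // scalerA crosspZr h4 crossp_cross.
  by rewrite bN // bT.
have cne : forall s, I s -> cos (theta s) != 0.
  by move=> s Is; have := tc s Is; rewrite mulf_eq0 negb_or => /andP[].
have tne : forall s, I s -> tau s != 0.
  by move=> s Is; have := tc s Is; rewrite mulf_eq0 negb_or => /andP[].
have thD : forall s, I s -> is_derive s 1 theta (kappa s).
  by move=> s Is; have [d e] := Hth s Is; rewrite -e; exact: d1 d.
have cosD : forall s, I s -> is_derive s 1 (fun t => cos (theta t)) (- sin (theta s) * kappa s).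
  move=> s Is; exact: (is_derive1_comp (is_derive_cos (theta s)) (thD s Is)).
have tanD : forall s, I s -> is_derive s 1 (fun t => tan (theta t)) (cos (theta s) ^- 2 * kappa s).
  move=> s Is; exact: (is_derive1_comp (is_derive_tan (cne s Is)) (thD s Is)).
case: (pselect (exists s, I s)) => [[s0 Is0]|Ie]; last first.
  split => _.
    exists 1, 0; split; first exact: oner_neq0.
    by move=> s Is; exfalso; apply: Ie; exists s.
  by exists 0 => s Is; exfalso; apply: Ie; exists s.
split.
- case=> c Hr.
  pose p := fun t => beta t + c.
  have dp : forall s, I s -> derivable p s 1.
    by move=> s Is; have := derivableD (Hb1 s Is).1 (derivable_cst c s 1).
  have dpE : derive1 p = derive1 beta := derive1_addc beta c.
  have pB : forall s, I s -> dotp (p s) (B s) = 0.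
    move=> s Is; have [l [m E]] := Hr s Is.
    have E' : p s = l *: frenetT (fun t => beta t + c) s + m *: frenetB (fun t => beta t + c) s := E.
    have [nu [_ [ET EB]]] := FB c s Is.
    have [_ _ _ _ [h1 h2 _ _ _]] := fr s Is.
    rewrite E' ET EB Hbeta // !(dotpDl, dotpZl, dotpNl) h1 h2; ring.
  have pN : forall s, I s -> dotp (p s) (N s) = 0.
    move=> s Is; have D := dotp_is_derive (dp s Is) (HF s Is).2.2.1.
    have Z := loc_zero oI Is pB D.
    have [_ [_ [_ [_ [_ HB']]]]] := HF s Is.
    move: Z; rewrite dpE bB // add0r HB' dotpZr => /eqP.
    by rewrite mulf_eq0 oppr_eq0 (negbTE (tne s Is)) /= => /eqP.
  have pT : forall s, I s -> kappa s * dotp (p s) (T s) = cos (theta s).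
    move=> s Is; have D := dotp_is_derive (dp s Is) (HF s Is).2.1.
    have Z := loc_zero oI Is pN D.
    have [_ [_ [_ [_ [HN' _]]]]] := HF s Is.
    move: Z; rewrite dpE bN // HN' dotpDr !dotpZr pB // mulr0 addr0 mulNr.
    by move=> /eqP; rewrite addr_eq0 opprK => /eqP ->.
  have chiD : forall s, I s -> is_derive s 1 (fun t => dotp (p t) (T t)) (sin (theta s)).
    move=> s Is; apply: is_derive_eq (dotp_is_derive (dp s Is) (HF s Is).1) _.
    have [_ [_ [_ [HT' _]]]] := HF s Is.
    by rewrite dpE bT // HT' dotpZr pN // mulr0 addr0.
  have hD : forall s, I s -> is_derive s 1 (fun t => cos (theta t) * dotp (p t) (T t)) 0.
    move=> s Is; apply: is_derive_eq (is_deriveM (cosD s Is) (chiD s Is)) _.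
    rewrite !scr; have := pT s Is; set q := dotp _ _ => E.
    rewrite -E; ring.
  have hC := itv_cst iI hD.
  set C := cos (theta s0) * dotp (p s0) (T s0).
  have hs : forall s, I s -> kappa s * C = cos (theta s) ^+ 2.
    move=> s Is; have := hC s s0 Is Is0 => /= E.
    by rewrite /C -E -(pT s Is); ring.
  have C0 : C != 0.
    apply/eqP => C0; move: (hs s0 Is0); rewrite C0 mulr0 => /esym/eqP.
    by rewrite expf_eq0 /= (negbTE (cne s0 Is0)).
  exists C^-1, (tan (theta s0) - C^-1 * s0); split; first by rewrite invr_eq0.
  have psiD : forall s, I s -> is_derive s 1 (fun t => tan (theta t) - C^-1 * t) 0.
    move=> s Is.
    apply: is_derive_eq (is_deriveB (tanD s Is) (is_deriveZ C^-1 (is_derive_id s 1))) _.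
    rewrite scr mulr1 -[kappa s](mulfK C0) hs //.
    by rewrite mulrA mulVf ?mul1r ?subrr // expf_neq0 // cne.
  move=> s Is; have := itv_cst iI psiD s s0 Is Is0 => /= E.
  by rewrite -E; ring.
- case=> a1 [a2 [a10 Ht]].
  have ka : forall s, I s -> kappa s = a1 * cos (theta s) ^+ 2.
    move=> s Is.
    have e1 : derive1 (fun t => tan (theta t)) s = cos (theta s) ^- 2 * kappa s.
      by have [_ <-] := tanD s Is; rewrite derive1E.
    have e2 : derive1 (fun t => tan (theta t)) s = a1.
      rewrite (loc_derive1 (psi := fun t => a1 * t + a2) oI Is Ht) derive1E.
      have [_ ->] := is_deriveD (is_deriveZ a1 (is_derive_id s 1)) (is_derive_cst a2 s 1).
      by rewrite scr mulr1 addr0.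
    rewrite -e2 e1 mulrAC mulVf ?mul1r //.
    by rewrite expf_neq0 // cne.
  pose g := fun t => (a1 * cos (theta t))^-1.
  have gD : forall s, I s -> is_derive s 1 g (sin (theta s)).
    move=> s Is.
    have nz : a1 * cos (theta s) != 0 by rewrite mulf_neq0 // cne.
    have H1 := is_deriveZ a1 (cosD s Is).
    have H2 := @is_deriveV R (a1 \*: (fun t => cos (theta t))) s _ 1 nz H1.
    apply: is_derive_eq H2 _.
    have c0 := cne s Is.
    rewrite !scr (ka s Is).
    have -> : (a1 \*: (fun t => cos (theta t))) s = a1 * cos (theta s) by [].
    by field; rewrite c0 a10.
  have PD : forall (i : 'I_3) s, I s ->
      is_derive s 1 (fun t => beta t 0 i - g t * T t 0 i) 0.
    move=> i s Is.
    have [_ [_ [_ [HT' _]]]] := HF s Is.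
    apply: is_derive_eq (is_deriveB (@coord_is_derive R beta s i (Hb1 s Is).1)
       (is_deriveM (gD s Is) (@coord_is_derive R T s i (HF s Is).1))) _.
    have c0 := cne s Is.
    rewrite !scr Hbeta // HT' !mxE /g (ka s Is).
    by field; rewrite c0 a10.
  pose c := - (beta s0 - g s0 *: T s0).
  exists c => s Is.
  have pE : beta s + c = g s *: T s.
    apply/rowP => i; rewrite !mxE.
    have := itv_cst iI (PD i) s s0 Is Is0 => /= E.
    by rewrite -E; ring.
  have [nu [nu0 [ET EB]]] := FB c s Is.
  exists (g s * sin (theta s)), (g s * cos (theta s) / nu).
  change (beta s + c = (g s * sin (theta s)) *: frenetT (fun t => beta t + c) s
     + (g s * cos (theta s) / nu) *: frenetB (fun t => beta t + c) s).
  rewrite pE ET EB Hbeta //.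
  apply/rowP => i; rewrite !mxE.
  have sc := cos2Dsin2 (theta s).
  rewrite -[X in X = _]mulr1 -sc.
  by field.
Qed.
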